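(* Let $\alpha\in(0,1)$, $\gamma,\beta>0$, $r_0>0$, $Y=B(0,r_0)\subset\mathbb R\oplus\mathbb R^{d-1}$, $\mathcal X(x)=\|x\|^\alpha Ax$ with $A=\gamma\,\mathrm{Id}_{\mathbb R}\oplus(-\beta\,\mathrm{Id}_{\mathbb R^{d-1}})$. Let $x$ be a trajectory of $\mathcal X$ entering $Y$ at time $0$ and leaving it at time $T_0$, $\theta(t)$ the angle between $x(t)$ and $\mathbb R\times\{0\}$, and let $s\in(0,\infty)$ with $\tan\theta(T_0)<s<\tan\theta(0)$, with $T_s$ the time at which $\tan\theta(T_s)=s$. (a) If $s^2>\gamma/\beta$, then $\chi(s):=\frac{\gamma}{\gamma+\beta}\left(1+\frac1{s^2}\right)<1$ and $T_s\le\chi(s)T_0$. (b) If $s^2<\gamma/\beta$, then $\chi'(s):=\frac{\gamma-\beta s^2}{\gamma+\beta}>0$ and $T_s\ge\chi'(s)T_0$. *)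

(* Defs.v *)
From HB Require Import structures.
From mathcomp Require Import all_boot all_order all_algebra.
From mathcomp Require Import all_classical all_reals all_analysis.
Set Implicit Arguments. Unset Strict Implicit. Unset Printing Implicit Defensive.
Import Order.TTheory GRing.Theory Num.Theory.
Import numFieldNormedType.Exports.
Local Open Scope ring_scope.

(* Points of R^d = R (+) R^(d-1) are row vectors 'rV[R]_(n.+1), d = n+1;
   coordinate ord0 is the R-factor, coordinates 1..n the R^(d-1)-factor. *)

Definition enorm {R : realType} {n : nat} (x : 'rV[R]_n) : R :=
  Num.sqrt (\sum_(i < n) x ord0 i ^+ 2).

Definition perp_norm {R : realType} {n : nat} (x : 'rV[R]_n.+1) : R :=
  Num.sqrt (\sum_(i < n.+1 | i != ord0) x ord0 i ^+ 2).

Definition Amat {R : realType} (n : nat) (gamma beta : R) : 'M[R]_n.+1 :=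
  diag_mx (\row_(i < n.+1) if i == ord0 then gamma else - beta).

(* The vector field  X(x) = ||x||^alpha A x  (A is diagonal, so x *m A = (A x^T)^T) *)
Definition vfield {R : realType} (n : nat) (alpha gamma beta : R)
    (x : 'rV[R]_n.+1) : 'rV[R]_n.+1 :=
  (powR (enorm x) alpha) *: (x *m Amat n gamma beta).

Definition angle_axis {R : realType} {n : nat} (x : 'rV[R]_n.+1) : R :=
  acos (`|x ord0 ord0| / enorm x).

(* Main.v *)
Require Import Defs.
From HB Require Import structures.
From mathcomp Require Import all_boot all_order all_algebra.
From mathcomp Require Import all_classical all_reals all_analysis.
From mathcomp Require Import ring lra.
Import Order.TTheory GRing.Theory Num.Theory.
Import numFieldNormedType.Exports.
Local Open Scope ring_scope.
Local Open Scope classical_set_scope.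




Section H.
Context {R : realType}.

Lemma ndecr_of (f f' : R -> R) (a b : R) :
  {within `[a, b], continuous f} ->
  (forall t, a < t < b -> is_derive t 1 f (f' t)) ->
  (forall t, a < t < b -> 0 <= f' t) ->
  forall x y, a <= x -> x <= y -> y <= b -> f x <= f y.
Proof.
move=> cf df pf; apply: ger0_derive1_ndecr => //.
- by move=> t; rewrite in_itv /= => /df [].
- by move=> t; rewrite in_itv /= => tab; rewrite derive1E; case: (df _ tab) => _ ->; exact: pf.
Qed.

Lemma within_comp (A : set R) (f g : R -> R) :
  {within A, continuous f} -> (forall t, A t -> {for f t, continuous g}) ->
  {within A, continuous (g \o f)}.
Proof.
move=> cf cg; rewrite continuous_subspace_in => t At.
have := @continuous_comp _ _ _ (from_subspace A f) g t (cf t) (cg t (set_mem At)).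
by [].
Qed.
Lemma dummy : True.
exact I.
Qed.

Lemma within_compv n (A : set R) (f : R -> 'rV[R]_n) i :
  {within A, continuous f} -> {within A, continuous (fun t => f t ord0 i)}.
Proof.
move=> cf t.
have := @continuous_comp _ _ _ (from_subspace A f) (fun M : 'M[R]_(1,n) => M ord0 i) t (cf t) (@coord_continuous R 1 n ord0 i (f t)).
by [].
Qed.

Lemma within_M (A : set R) (f g : R -> R) :
  {within A, continuous f} -> {within A, continuous g} ->
  {within A, continuous (f \* g)}.
Proof. by move=> cf cg x; apply: cvgM; [exact: cf|exact: cg]. Qed.

Lemma within_sum n (A : set R) (f : 'I_n -> R -> R) :
  (forall i, {within A, continuous (f i)}) ->
  {within A, continuous (fun t => \sum_(i < n) f i t)}.
Proof.
move=> cf x; apply: (@cvg_big _ _ +%R 0 xpredT add_continuous) => // i _; exact: cf.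
Qed.

Lemma within_id (A : set R) : {within A, continuous (fun t : R => t)}.
Proof. by apply: continuous_subspaceT => x; exact: cvg_id. Qed.

End H.
Arguments ndecr_of {R f f' a b}.



Lemma mono_lin {R : realType} (f f' : R -> R) (k a b T0 : R) :
  0 <= a -> a <= b -> b <= T0 -> {within `[0, T0], continuous f} ->
  (forall t, 0 < t < T0 -> is_derive t 1 f (f' t)) ->
  (forall t, a < t < b -> 0 <= f' t + k) -> f a + k * a <= f b + k * b.
Proof.
move=> a0 ab bT cf df pf.
pose g t := f t + k * t.
have cg : {within `[a, b], continuous g}.
  apply: (@continuous_subspaceW _ _ _ `[0, T0]).
    by apply: subset_itv; rewrite bnd_simp.
  apply: within_continuousD => //.
  apply: within_M => //; last exact: within_id.
  by apply: continuous_subspaceT => x; exact: cvg_cst.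
have dg : forall t, a < t < b -> is_derive t 1 g (f' t + k).
  move=> t /andP[ta tb].
  have t0 : 0 < t < T0 by apply/andP; split; lra.
  have := is_deriveD (df t t0) (is_deriveZ k (is_derive_id t 1)).
  rewrite (_ : f + k *: id = g); last by apply/funext => y.
  by move/is_derive_eq; apply; rewrite /GRing.scale /= mulr1.
exact: (ndecr_of cg dg pf).
Qed.



Section C.
Context {R : realType}.

Lemma core (alpha gamma beta T0 Ts cs : R) (U N : R -> R) :
  0 < alpha -> 0 < gamma -> 0 < beta -> 0 < T0 -> 0 <= Ts <= T0 ->
  {within `[0, T0], continuous U} -> {within `[0, T0], continuous N} ->
  (forall t, 0 < t < T0 -> is_derive t 1 U (2 * gamma * powR (N t) (alpha/2) * U t)) ->
  (forall t, 0 < t < T0 -> is_derive t 1 N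
       (2 * powR (N t) (alpha/2) * (gamma * U t - beta * (N t - U t)))) ->
  (forall t, 0 <= U t) -> 0 < U 0 ->
  (forall t, 0 <= t <= T0 -> U t <= N t) ->
  N 0 = N T0 -> U Ts / N Ts = cs ->
  Ts * (alpha * (gamma + beta) * (1 - cs)) <= alpha * gamma * T0 /\
  alpha * ((gamma + beta) * cs - beta) * T0 <= alpha * (gamma + beta) * cs * Ts.
Proof.
move=> a0 g0 b0 T00 /andP[Ts0 TsT] cU cN dU dN U0 Ug0 UN N0T cTs.
have Umono : forall x y, 0 <= x -> x <= y -> y <= T0 -> U x <= U y.
  apply: (ndecr_of cU dU) => y /andP[y0 yT].
  by rewrite !mulr_ge0 ?U0 ?powR_ge0 ?ler0n // ltW.
have Upos : forall t, 0 <= t <= T0 -> 0 < U t.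
  by move=> t /andP[t0 tT]; apply: (lt_le_trans Ug0); apply: Umono.
have Npos : forall t, 0 <= t <= T0 -> 0 < N t.
  by move=> t tT; apply: (lt_le_trans (Upos t tT)); exact: UN.
pose c t := U t * (N t)^-1.
have cc : {within `[0, T0], continuous c}.
  apply: within_M => //; apply: (@within_comp _ _ N GRing.inv) => //.
  move=> t; rewrite /= in_itv /= => tT.
  by apply: inv_continuous; rewrite gt_eqF // Npos.
have dc : forall t, 0 < t < T0 -> is_derive t 1 c
    (2 * powR (N t) (alpha/2) * (gamma + beta) * U t * (N t - U t) / (N t) ^+ 2).
  move=> t tT; have tT' : 0 <= t <= T0 by case/andP: tT => *; apply/andP; split; apply: ltW.
  have Nt := Npos t tT'.
  have := is_deriveM (dU t tT) (@is_deriveV _ N t _ _ (lt0r_neq0 Nt) (dN t tT)).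
  have -> : c = U * (fun y => (N y)^-1) by apply/funext => y.
  move/is_derive_eq; apply.
  rewrite /GRing.scale /=; field; exact: lt0r_neq0.
have cmono : forall x y, 0 <= x -> x <= y -> y <= T0 -> c x <= c y.
  apply: (ndecr_of cc dc) => y /andP[y0 yT].
  have yT' : 0 <= y <= T0 by rewrite !ltW.
  have := UN y yT'; have := Npos y yT' => Ny UNy.
  rewrite !mulr_ge0 ?U0 ?powR_ge0 ?ler0n ?subr_ge0 ?UNy ?invr_ge0 ?exprn_ge0 ?ltW //.
  by rewrite addr_gt0.
have cle1 : forall t, 0 <= t <= T0 -> c t <= 1.
  move=> t tT; rewrite /c ler_pdivrMr ?mul1r ?Npos //; exact: UN.
have cge0 : forall t, 0 <= t <= T0 -> 0 <= c t.
  by move=> t tT; rewrite /c divr_ge0 ?U0 // ltW ?Npos.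
pose E t := powR (N t) (- (alpha / 2)).
have cE : {within `[0, T0], continuous E}.
  rewrite (_ : E = (fun y : R => powR y (- (alpha / 2))) \o N) //.
  apply: (@within_comp _ _ N (fun y : R => powR y (- (alpha / 2)))) => //.
  move=> t; rewrite /= in_itv /= => tT.
  have [dp _] := is_derive1_powR (- (alpha/2)) (Npos t tT).
  exact/differentiable_continuous/derivable1_diffP.
have dE : forall t, 0 < t < T0 -> is_derive t 1 E (alpha * (beta - (gamma + beta) * c t)).
  move=> t tT; have tT' : 0 <= t <= T0 by case/andP: tT => *; apply/andP; split; apply: ltW.
  have Nt := Npos t tT'.
  have := is_derive1_comp (is_derive1_powR (- (alpha/2)) Nt) (dN t tT).
  move/is_derive_eq; apply.
  have -> : N t `^ (- (alpha / 2) - 1) = (N t)^-1 / N t `^ (alpha / 2).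
    rewrite -[(N t)^-1]powR_inv1 ?ltW // -powRB; last by apply/implyP => _; rewrite lt0r_neq0.
    by congr (_ `^ _); ring.
  rewrite /c; field; rewrite !lt0r_neq0 // powR_gt0 //.
have E0T : E 0 = E T0 by rewrite /E N0T.
have cTs' : c Ts = cs by [].
have TsI : 0 <= Ts <= T0 by rewrite Ts0 TsT.
have cEN : {within `[0, T0], continuous (fun t => - E t)}.
  rewrite (_ : (fun t => - E t) = (fun y : R => - y) \o E) //.
  apply: (@within_comp _ _ E (fun y : R => - y)) => // t _.
  exact: oppr_continuous.
have dEN : forall t, 0 < t < T0 -> is_derive t 1 (fun t => - E t) (- (alpha * (beta - (gamma + beta) * c t))).
  move=> t tT; have := is_deriveN (dE t tT).
  by rewrite (_ : - E = (fun t => - E t)) //; apply/funext => y.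
pose k1 := alpha * (beta - (gamma + beta) * cs).
have h1 := @mono_lin R E _ (- k1) 0 Ts T0 (lexx 0) Ts0 TsT cE dE.
have h2 := @mono_lin R E _ (alpha * gamma) Ts T0 T0 Ts0 TsT (lexx T0) cE dE.
have h3 := @mono_lin R (fun t => - E t) _ (alpha * beta) 0 Ts T0 (lexx 0) Ts0 TsT cEN dEN.
have h4 := @mono_lin R (fun t => - E t) _ k1 Ts T0 T0 Ts0 TsT (lexx T0) cEN dEN.
have ctl : forall t, 0 < t < Ts -> c t <= cs.
  move=> t /andP[t0 tT]; rewrite -cTs'; apply: cmono; lra.
have ctg : forall t, Ts < t < T0 -> cs <= c t.
  move=> t /andP[t0 tT]; rewrite -cTs'; apply: cmono; lra.
have ct1 : forall t, Ts < t < T0 -> c t <= 1.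
  move=> t /andP[t0 tT]; apply: cle1; apply/andP; split; lra.
have ct0 : forall t, 0 < t < Ts -> 0 <= c t.
  move=> t /andP[t0 tT]; apply: cge0; apply/andP; split; lra.
have gb : 0 < gamma + beta by rewrite addr_gt0.
have H1 : E 0 + - k1 * 0 <= E Ts + - k1 * Ts.
  apply: h1 => t /ctl ct; rewrite /k1.
  have : 0 <= alpha * ((gamma + beta) * (cs - c t)).
    by apply: (mulr_ge0 (ltW a0) (mulr_ge0 (ltW gb) _)); rewrite subr_ge0.
  move=> H; apply: (le_trans H); rewrite le_eqVlt; apply/orP; left; apply/eqP; ring.
have H2 : E Ts + alpha * gamma * Ts <= E T0 + alpha * gamma * T0.
  apply: h2 => t /ct1 ct.
  have : 0 <= alpha * ((gamma + beta) * (1 - c t)).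
    by apply: (mulr_ge0 (ltW a0) (mulr_ge0 (ltW gb) _)); rewrite subr_ge0.
  move=> H; apply: (le_trans H); rewrite le_eqVlt; apply/orP; left; apply/eqP; ring.
have H3 : - E 0 + alpha * beta * 0 <= - E Ts + alpha * beta * Ts.
  apply: h3 => t /ct0 ct.
  have : 0 <= alpha * ((gamma + beta) * c t).
    by apply: (mulr_ge0 (ltW a0) (mulr_ge0 (ltW gb) _)).
  move=> H; apply: (le_trans H); rewrite le_eqVlt; apply/orP; left; apply/eqP; ring.
have H4 : - E Ts + k1 * Ts <= - E T0 + k1 * T0.
  apply: h4 => t /ctg ct; rewrite /k1.
  have : 0 <= alpha * ((gamma + beta) * (c t - cs)).
    by apply: (mulr_ge0 (ltW a0) (mulr_ge0 (ltW gb) _)); rewrite subr_ge0.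
  move=> H; apply: (le_trans H); rewrite le_eqVlt; apply/orP; left; apply/eqP; ring.
rewrite mulr0 addr0 in H1; rewrite mulr0 addr0 in H3.
split.
  have -> : Ts * (alpha * (gamma + beta) * (1 - cs)) = (alpha * gamma + k1) * Ts by rewrite /k1; ring.
  rewrite mulrDl; lra.
have -> : alpha * ((gamma + beta) * cs - beta) = - k1 by rewrite /k1; ring.
have -> : alpha * (gamma + beta) * cs * Ts = (alpha * beta - k1) * Ts by rewrite /k1; ring.
rewrite mulrBl mulNr; lra.
Qed.

End C.



Section M.
Context {R : realType}.

Lemma dcoord n (x : R -> 'rV[R]_n) (t : R) (V : 'rV[R]_n) (i : 'I_n) :
  is_derive t 1 x V -> is_derive t 1 (fun t => x t ord0 i) (V ord0 i).
Proof.
case=> dx dV.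
have dxi := (derivable_mxP x t 1).1 dx ord0 i.
apply: DeriveDef => //.
by rewrite -dV (derive_mx dx) mxE.
Qed.

Lemma vfieldE n (alpha gamma beta : R) (v : 'rV[R]_n.+1) i :
  vfield alpha gamma beta v ord0 i =
  powR (enorm v) alpha * (v ord0 i * (if i == ord0 then gamma else - beta)).
Proof. by rewrite /vfield /Amat mxE mul_mx_diag !mxE. Qed.

Definition Nv {n} (v : 'rV[R]_n.+1) := \sum_(i < n.+1) v ord0 i ^+ 2.
Definition Pv {n} (v : 'rV[R]_n.+1) := \sum_(i < n.+1 | i != ord0) v ord0 i ^+ 2.

Lemma NvE n (v : 'rV[R]_n.+1) : Nv v = v ord0 ord0 ^+ 2 + Pv v.
Proof. by rewrite /Nv (bigD1 ord0). Qed.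

Lemma Pv_ge0 n (v : 'rV[R]_n.+1) : 0 <= Pv v.
Proof. by apply: sumr_ge0 => i _; exact: sqr_ge0. Qed.

Lemma tan_angle n (v : 'rV[R]_n.+1) : 0 < Nv v ->
  tan (angle_axis v) = Num.sqrt (1 - v ord0 ord0 ^+ 2 / Nv v) / Num.sqrt (v ord0 ord0 ^+ 2 / Nv v).
Proof.
move=> N0.
set c := v ord0 ord0 ^+ 2 / Nv v.
have c0 : 0 <= c by rewrite divr_ge0 ?sqr_ge0 ?ltW.
have c1 : c <= 1.
  by rewrite /c ler_pdivrMr // mul1r NvE lerDl Pv_ge0.
rewrite /angle_axis.
have -> : `|v ord0 ord0| / enorm v = Num.sqrt c.
  rewrite /c sqrtrM ?sqr_ge0 // sqrtr_sqr sqrtrV ?ltW //.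
have y1 : Num.sqrt c \in `[-1, 1]%R.
  rewrite in_itv /=; apply/andP; split.
    by apply: le_trans (sqrtr_ge0 _); rewrite lerN10.
  by rewrite -sqrtr1 ler_sqrt.
rewrite /tan acosK // sin_acos; last by rewrite in_itv in y1.
by rewrite sqr_sqrtr.
Qed.

Lemma tan_c (c s : R) : 0 <= c -> c <= 1 -> 0 < s ->
  Num.sqrt (1 - c) / Num.sqrt c = s -> c = (1 + s ^+ 2)^-1.
Proof.
move=> c0 c1 s0 H.
have [c00|cn0] := eqVneq c 0.
  by move: H; rewrite c00 sqrtr0 invr0 mulr0 => H; rewrite H ltxx in s0.
have cp : 0 < c by rewrite lt_neqAle eq_sym cn0.
have sc : 0 < Num.sqrt c by rewrite sqrtr_gt0.
have H' : Num.sqrt (1 - c) = s * Num.sqrt c.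
  by rewrite -H mulrVK // unitfE lt0r_neq0.
have : (Num.sqrt (1 - c)) ^+ 2 = (s * Num.sqrt c) ^+ 2 by rewrite H'.
rewrite exprMn !sqr_sqrtr ?subr_ge0 // => E.
apply/eqP; rewrite eq_sym -[c]invrK; apply/eqP; congr (_^-1).
apply: (mulIf (lt0r_neq0 cp)); rewrite mulVf ?lt0r_neq0 //.
rewrite mulrDl mul1r -E; ring.
Qed.

Lemma tan_c_gt (c s : R) : 0 < s -> s < Num.sqrt (1 - c) / Num.sqrt c -> 0 <> c.
Proof. by move=> s0 H c0; move: H; rewrite -c0 sqrtr0 invr0 mulr0 => H; lra. Qed.

End M.

Lemma tan_angle0 {R : realType} n (v : 'rV[R]_n.+1) : Nv v = 0 -> tan (angle_axis v) = 0.
Proof.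
move=> N0; rewrite /angle_axis /enorm.
rewrite (_ : \sum_(i < n.+1) v ord0 i ^+ 2 = 0) //.
by rewrite sqrtr0 invr0 mulr0 acos0 /tan cos_pihalf invr0 mulr0.
Qed.

Theorem lemma7p5 (R : realType) (n : nat) (alpha gamma beta r0 : R)
  (x : R -> 'rV[R]_n.+1) (T0 s : R) :
  0 < alpha -> alpha < 1 -> 0 < gamma -> 0 < beta -> 0 < r0 ->
  0 < T0 ->
  (* x is a trajectory of the vector field on [0, T0] *)
  {within `[0, T0], continuous x} ->
  (forall t, 0 < t < T0 -> is_derive t (1 : R) x (vfield alpha gamma beta (x t))) ->
  (* x enters Y = B(0, r0) at time 0 and leaves it at time T0 *)
  enorm (x 0) = r0 -> enorm (x T0) = r0 ->
  (forall t, 0 < t < T0 -> enorm (x t) < r0) ->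
  0 < s ->
  tan (angle_axis (x T0)) < s -> s < tan (angle_axis (x 0)) ->
  forall Ts, 0 <= Ts <= T0 -> tan (angle_axis (x Ts)) = s ->
  (s ^+ 2 > gamma / beta ->
     gamma / (gamma + beta) * (1 + 1 / s ^+ 2) < 1 /\
     Ts <= gamma / (gamma + beta) * (1 + 1 / s ^+ 2) * T0) /\
  (s ^+ 2 < gamma / beta ->
     0 < (gamma - beta * s ^+ 2) / (gamma + beta) /\
     (gamma - beta * s ^+ 2) / (gamma + beta) * T0 <= Ts).
Proof.
move=> a0 a1 g0 b0 r00 T00 cx dx nx0 nxT nxin s0 tT0 tT0' Ts TsI tTs.
pose U t := x t ord0 ord0 ^+ 2.
pose N t := Nv (x t).
have Nge0 : forall t, 0 <= N t by move=> t; apply: sumr_ge0 => i _; exact: sqr_ge0.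
have cxi : forall i, {within `[0, T0], continuous (fun t => x t ord0 i ^+ 2)}.
  move=> i; rewrite (_ : (fun t => x t ord0 i ^+ 2) = (fun t => x t ord0 i) \* (fun t => x t ord0 i)).
    by apply: within_M; apply: within_compv.
  by apply/funext => t; rewrite /= expr2.
have cU : {within `[0, T0], continuous U} by exact: cxi.
have cN : {within `[0, T0], continuous N} by apply: within_sum => i; exact: cxi.
have wE : forall t, powR (enorm (x t)) alpha = powR (N t) (alpha / 2).
  move=> t; rewrite /enorm -powR12_sqrt ?Nge0 // -powRrM.
  by congr (_ `^ _); rewrite mulrC.
have dxi : forall t, 0 < t < T0 -> forall i, is_derive t 1 (fun t => x t ord0 i ^+ 2)
    (2 * x t ord0 i * vfield alpha gamma beta (x t) ord0 i).
  move=> t tT i; have di := @dcoord R _ x t _ i (dx t tT).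
  have := is_deriveM di di.
  rewrite (_ : (fun t => x t ord0 i) * (fun t => x t ord0 i) = (fun t => x t ord0 i ^+ 2)).
    by move/is_derive_eq; apply; rewrite /GRing.scale /=; ring.
  by apply/funext => y; rewrite /= expr2.
have dU : forall t, 0 < t < T0 -> is_derive t 1 U (2 * gamma * powR (N t) (alpha/2) * U t).
  move=> t tT; have := dxi t tT ord0; move/is_derive_eq; apply.
  by rewrite vfieldE eqxx wE /U; ring.
have dN : forall t, 0 < t < T0 -> is_derive t 1 N
       (2 * powR (N t) (alpha/2) * (gamma * U t - beta * (N t - U t))).
  move=> t tT; have := is_derive_sum (dxi t tT).
  rewrite fct_sumE; move/is_derive_eq; apply.
  have NU : N t - U t = Pv (x t) by rewrite /N NvE /U; ring.
  rewrite NU (bigD1 ord0) //= vfieldE eqxx wE /Pv.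
  have -> : \sum_(i < n.+1 | i != ord0) 2 * x t ord0 i * vfield alpha gamma beta (x t) ord0 i =
     \sum_(i < n.+1 | i != ord0) 2 * N t `^ (alpha / 2) * (- beta * x t ord0 i ^+ 2).
    apply: eq_bigr => i /negbTE i0; rewrite vfieldE i0 wE; ring.
  rewrite -big_distrr /= -big_distrr /= /U; ring.
have Ug : forall t, 0 <= U t by move=> t; exact: sqr_ge0.
have UN : forall t, 0 <= t <= T0 -> U t <= N t.
  by move=> t _; rewrite /N NvE lerDl Pv_ge0.
have Npos_of : forall t, enorm (x t) = r0 -> 0 < N t.
  move=> t; rewrite /enorm => H; rewrite lt_neqAle Nge0 andbT eq_sym.
  apply/negP => /eqP N0; move: H; rewrite /N /Nv in N0; rewrite N0 sqrtr0 => H; lra.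
have N0p := Npos_of 0 nx0.
have U0 : 0 < U 0.
  rewrite lt_neqAle Ug andbT eq_sym; apply/negP => /eqP U00.
  move: tT0'; rewrite (@tan_angle R _ (x 0) N0p) => tT0'.
  have := @tan_c_gt R _ s s0 tT0'.
  by rewrite -/(U 0) U00 mul0r.
have N0T : N 0 = N T0.
  have h : Num.sqrt (N 0) = Num.sqrt (N T0) by rewrite -[LHS]/(enorm (x 0)) -[RHS]/(enorm (x T0)) nx0 nxT.
  by rewrite -(sqr_sqrtr (Nge0 0)) -(sqr_sqrtr (Nge0 T0)) h.
have NTs : 0 < N Ts.
  rewrite lt_neqAle Nge0 andbT eq_sym; apply/negP => /eqP NT.
  by move: tTs; rewrite (@tan_angle0 R _ (x Ts) NT) => h; lra.
have cTs : U Ts / N Ts = (1 + s ^+ 2)^-1.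
  apply: (@tan_c R _ s) => //.
  - by rewrite divr_ge0.
  - by rewrite ler_pdivrMr // mul1r; apply: UN.
  - by rewrite -tTs (@tan_angle R _ (x Ts) NTs).
have [A B] := @core R alpha gamma beta T0 Ts _ U N a0 g0 b0 T00 TsI cU cN dU dN Ug U0 UN N0T cTs.
set q := 1 + s ^+ 2 in A B.
have q0 : 0 < q by rewrite /q ltr_pwDl // sqr_ge0.
have s20 : 0 < s ^+ 2 by rewrite exprn_gt0.
have gb : 0 < gamma + beta by rewrite addr_gt0.
have aq : 0 < alpha / q by rewrite divr_gt0.
split => hs.
  have A' : (gamma + beta) * s ^+ 2 * Ts <= gamma * q * T0.
    rewrite -(ler_pM2l aq).
    apply: le_trans (le_trans A _); first by rewrite le_eqVlt; apply/orP; left; apply/eqP; rewrite /q; field; rewrite lt0r_neq0.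
    by rewrite le_eqVlt; apply/orP; left; apply/eqP; rewrite /q; field; rewrite lt0r_neq0.
  split.
    have h : gamma < s ^+ 2 * beta by rewrite -ltr_pdivrMr.
    rewrite (_ : gamma / (gamma + beta) * (1 + 1 / s ^+ 2) = (gamma * q) / ((gamma + beta) * s ^+ 2)); last first.
      by rewrite /q; field; rewrite !lt0r_neq0.
    by rewrite ltr_pdivrMr ?mulr_gt0 // mul1r /q; nra.
  rewrite (_ : gamma / (gamma + beta) * (1 + 1 / s ^+ 2) * T0 = (gamma * q * T0) / ((gamma + beta) * s ^+ 2)); last first.
    by rewrite /q; field; rewrite !lt0r_neq0.
  by rewrite ler_pdivlMr ?mulr_gt0 // mulrC.
have B' : (gamma - beta * s ^+ 2) * T0 <= (gamma + beta) * Ts.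
  rewrite -(ler_pM2l aq).
  apply: le_trans (le_trans B _); first by rewrite le_eqVlt; apply/orP; left; apply/eqP; rewrite /q; field; rewrite lt0r_neq0.
  by rewrite le_eqVlt; apply/orP; left; apply/eqP; rewrite /q; field; rewrite lt0r_neq0.
split.
  have h : s ^+ 2 * beta < gamma by rewrite -ltr_pdivlMr.
  by rewrite divr_gt0 // subr_gt0 mulrC.
rewrite mulrAC ler_pdivrMr //.
by rewrite [Ts * _]mulrC.
Qed.
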